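(* Assume $r>\mu$. (a) If $C-rK_O\le0$ and $C+rK_I>0$, and $p_I:=e^{-\mu\delta}\frac{\lambda_2}{\lambda_2-1}(r-\mu)\left(\frac{C}{r}+K_I\right)$, then $p_I>e^{-\mu\delta}(C+rK_I)$. (b) If $C-rK_O>0$, $C+rK_I>0$, $K_I+K_O\ge0$, and $p_I$ is the largest solution of $A(\lambda_2-\lambda_1)p^{\lambda_1}+\frac{e^{(\mu-r)\delta}}{r-\mu}(\lambda_2-1)p-\lambda_2e^{-r\delta}\left(\frac{C}{r}+K_I\right)=0$, then $p_I>e^{-\mu\delta}(C+rK_I)$. (c) If $C-rK_O>0$, $C+rK_I>0$, $K_I+K_O<0$ and $p_O<e^{-\mu\delta}(C+rK_I)$, and $p_I^{(1)}<p_I^{(2)}$ are the entry thresholds for which $\tau_I^*:=\inf\{t>0:P(t)\le p_I^{(1)}\text{ or }P(t)\ge p_I^{(2)}\}$ maximizes the problem defining $H$ (equivalently, $(p_I^{(1)},p_I^{(2)})$ is the solution with $p_I^{(1)}<p_I^{(2)}$ of the smooth-fit system: there are constants $B_1,B_2$ with $B_1x^{\lambda_1}+B_2x^{\lambda_2}=-e^{-r\delta}(K_I+K_O)$ and $\lambda_1B_1x^{\lambda_1-1}+\lambda_2B_2x^{\lambda_2-1}=0$ at $x=p_I^{(1)}$, and $B_1y^{\lambda_1}+B_2y^{\lambda_2}=Ay^{\lambda_1}+\frac{e^{(\mu-r)\delta}}{r-\mu}y-e^{-r\delta}(\frac{C}{r}+K_I)$ and $\lambda_1B_1y^{\lambda_1-1}+\lambda_2B_2y^{\lambda_2-1}=\lambda_1Ay^{\lambda_1-1}+\frac{e^{(\mu-r)\delta}}{r-\mu}$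 at $y=p_I^{(2)}$, with $p_I^{(1)}\le p_O$), then $p_I^{(1)}<e^{-\mu\delta}(C-rK_O)$ and $p_I^{(2)}>e^{-\mu\delta}(C+rK_I)$.
   Context: Price $P$: $\mathrm{d}P=\mu P\,\mathrm{d}t+\sigma P\,\mathrm{d}B$, $P(0)=p>0$, with $B$ a standard Brownian motion, $\mu\in\mathbb{R}$, $\sigma>0$; $\mathbb{E}^p$ is expectation given $P(0)=p$; stopping times valued in $[0,+\infty]$ with $e^{-r\tau}(\cdots)=0$ on $\{\tau=\infty\}$. Constants $r>0$, $C,K_I,K_O\in\mathbb{R}$, $\delta\ge0$. $\lambda_1<\lambda_2$ are the roots of $r-\mu\lambda-\frac12\sigma^2\lambda(\lambda-1)=0$. $k_1:=\frac{e^{(\mu-r)\delta}-1}{\mu-r}$, $k_0:=\frac{C}{r}(e^{-r\delta}-1)+e^{-r\delta}K_I$, $l_1:=-k_1$, $l_0:=-\frac{C}{r}(e^{-r\delta}-1)+e^{-r\delta}K_O$. $G(p):=\sup_{\tau_O}\mathbb{E}^p[\int_0^{\tau_O}e^{-rt}(P(t)-C)\mathrm{d}t-e^{-r\tau_O}(l_1P(\tau_O)+l_0)]$ and $H(p):=\sup_{\tau_I}\mathbb{E}^p[e^{-r\tau_I}(G(P(\tau_I))-k_1P(\tau_I)-k_0)]$. When $C>rK_O$: $p_O:=e^{-\mu\delta}\frac{\lambda_1}{\lambda_1-1}(r-\mu)(\frac{C}{r}-K_O)$, $A:=e^{(\mu-r)\delta}p_O^{1-\lambda_1}/(\lambda_1(\mu-r))$.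 *)

(* Defs.v *)
From Stdlib Require Import Reals.
Open Scope R_scope.

(* lambda1 < lambda2: the two roots of  r - mu*l - (1/2) sigma^2 l (l-1) = 0,
   i.e. of (1/2) sigma^2 l^2 - ((1/2) sigma^2 - mu) l - r = 0  (sigma > 0). *)
Definition lam1 (mu sigma r : R) : R :=
  ((sigma^2/2 - mu) - sqrt ((sigma^2/2 - mu)^2 + 2 * sigma^2 * r)) / sigma^2.
Definition lam2 (mu sigma r : R) : R :=
  ((sigma^2/2 - mu) + sqrt ((sigma^2/2 - mu)^2 + 2 * sigma^2 * r)) / sigma^2.

Definition pO (mu sigma r delta C KO : R) : R :=
  exp (- mu * delta) * (lam1 mu sigma r / (lam1 mu sigma r - 1))
    * (r - mu) * (C / r - KO).

Definition Acoef (mu sigma r delta C KO : R) : R :=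
  exp ((mu - r) * delta) * Rpower (pO mu sigma r delta C KO) (1 - lam1 mu sigma r)
    / (lam1 mu sigma r * (mu - r)).

(* Main.v *)
Require Import Defs.
From Stdlib Require Import Reals Lra Psatz Ranalysis5.
From Coquelicot Require Import Coquelicot.
Open Scope R_scope.

Lemma lam_facts (mu sigma r : R) : 0 < sigma -> 0 < r -> r > mu ->
  let s := sigma^2/2 in
  r = - s * lam1 mu sigma r * lam2 mu sigma r /\
  mu = s * (1 - lam1 mu sigma r - lam2 mu sigma r) /\
  lam1 mu sigma r < 0 /\ 1 < lam2 mu sigma r.
Proof.
intros Hs Hr Hrm s.
unfold lam1, lam2.
set (D := (sigma ^ 2 / 2 - mu) ^ 2 + 2 * sigma ^ 2 * r).
assert (HD : 0 < D). { unfold D. assert (0 < sigma^2) by (apply pow_lt; lra). nra. }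
assert (HS := sqrt_lt_R0 D HD). assert (HSS := sqrt_sqrt D (Rlt_le _ _ HD)).
set (S := sqrt D) in *.
assert (Hs2 : 0 < sigma^2) by (apply pow_lt; lra).
assert (E1 : r = - s * ((sigma ^ 2 / 2 - mu - S) / sigma ^ 2) * ((sigma ^ 2 / 2 - mu + S) / sigma ^ 2)).
{ assert (HP : ((sigma ^ 2 / 2 - mu - S) / sigma ^ 2) * ((sigma ^ 2 / 2 - mu + S) / sigma ^ 2) = ((sigma ^ 2 / 2 - mu)^2 - S*S) / (sigma^2)^2) by (field; lra).
  rewrite Rmult_assoc, HP, HSS. unfold D, s. field. lra. }
assert (E2 : mu = s * (1 - (sigma ^ 2 / 2 - mu - S) / sigma ^ 2 - (sigma ^ 2 / 2 - mu + S) / sigma ^ 2)).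
{ unfold s. field. lra. }
set (a1 := (sigma ^ 2 / 2 - mu - S) / sigma ^ 2) in *.
set (a2 := (sigma ^ 2 / 2 - mu + S) / sigma ^ 2) in *.
assert (Hlt : a1 < a2). { unfold a1, a2. apply Rmult_lt_compat_r. apply Rinv_0_lt_compat; lra. lra. }
assert (hs : 0 < s) by (unfold s; lra).
assert (Hneg : a1 < 0). { destruct (Rlt_or_le a1 0) as [h|h]; auto. exfalso. assert (0 <= s*(a1*a2)) by (apply Rmult_le_pos; [lra|apply Rmult_le_pos; lra]). assert (r = -(s*(a1*a2))) by (rewrite E1; ring). lra. }
split; [exact E1|split;[exact E2|split;[exact Hneg|]]].
assert (Hrm2 : r - mu = s * (1 - a1) * (a2 - 1)). { rewrite E1 at 1. rewrite E2 at 1. ring. }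
assert (h1 : 0 < s * (1 - a1)) by (apply Rmult_lt_0_compat; lra).
destruct (Rlt_or_le 1 a2) as [h|h]; auto. exfalso.
assert (s * (1 - a1) * (a2 - 1) <= 0) by (apply Rmult_le_0_l; lra). lra.
Qed.

Lemma exp_split (l x : R) : exp (l * x) = exp x * exp ((l - 1) * x).
Proof. rewrite <- exp_plus. f_equal. ring. Qed.

Lemma P_ge (l1 l2 x : R) : l1 < 1 -> 1 < l2 ->
  0 <= (l2-1)*exp(l1*x) + (1-l1)*exp(l2*x) - (l2-l1)*exp x.
Proof.
intros h1 h2. rewrite (exp_split l1), (exp_split l2).
assert (e1 := exp_ineq1_le ((l1-1)*x)). assert (e2 := exp_ineq1_le ((l2-1)*x)).
assert (ex := exp_pos x).
assert (0 <= (l2-1)*exp x*(exp ((l1 - 1) * x) - (1 + (l1 - 1) * x))).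
{ apply Rmult_le_pos; [apply Rmult_le_pos; lra|lra]. }
assert (0 <= (1-l1)*exp x*(exp ((l2 - 1) * x) - (1 + (l2 - 1) * x))).
{ apply Rmult_le_pos; [apply Rmult_le_pos; lra|lra]. }
nra.
Qed.

Lemma P_gt (l1 l2 x : R) : l1 < 1 -> 1 < l2 -> x <> 0 ->
  0 < (l2-1)*exp(l1*x) + (1-l1)*exp(l2*x) - (l2-l1)*exp x.
Proof.
intros h1 h2 hx. rewrite (exp_split l1), (exp_split l2).
assert (e1 : 1 + (l1-1)*x < exp ((l1-1)*x)).
{ apply exp_ineq1. intro H. apply Rmult_integral in H. destruct H; lra. }
assert (e2 := exp_ineq1_le ((l2-1)*x)).
assert (ex := exp_pos x).
assert (0 < (l2-1)*exp x*(exp ((l1 - 1) * x) - (1 + (l1 - 1) * x))).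
{ apply Rmult_lt_0_compat; [apply Rmult_lt_0_compat; lra|lra]. }
assert (0 <= (1-l1)*exp x*(exp ((l2 - 1) * x) - (1 + (l2 - 1) * x))).
{ apply Rmult_le_pos; [apply Rmult_le_pos; lra|lra]. }
nra.
Qed.

Definition Tf (l1 l2 u : R) : R :=
  - l2*(l2-1)*exp(l1*u) - l1*(1-l1)*exp(l2*u) + l1*l2*(l2-l1)*exp u
  + (1-l1)*(l2-1)*(l2-l1).

Lemma T_neg (l1 l2 u : R) : l1 < 0 -> 1 < l2 -> u < 0 -> Tf l1 l2 u < 0.
Proof.
intros h1 h2 hu.
destruct (MVT_cor2 (Tf l1 l2)
  (fun c => - l1*l2*((l2-1)*exp(l1*c) + (1-l1)*exp(l2*c) - (l2-l1)*exp c)) u 0 hu)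
  as [c [Hc1 Hc2]].
{ intros c _. apply is_derive_Reals. unfold Tf. auto_derive; [auto|]. ring. }
assert (HT0 : Tf l1 l2 0 = 0). { unfold Tf. rewrite !Rmult_0_r, exp_0. ring. }
assert (HP := P_gt l1 l2 c ltac:(lra) h2 ltac:(lra)).
assert (0 < - l1 * l2) by nra.
assert (0 < - l1*l2*((l2-1)*exp(l1*c) + (1-l1)*exp(l2*c) - (l2-l1)*exp c) * (0 - u)).
{ apply Rmult_lt_0_compat; [|lra]. apply Rmult_lt_0_compat; lra. }
lra.
Qed.

Lemma Rp_m1 p l : 0 < p -> Rpower p (l-1) * p = Rpower p l.
Proof. intro hp. rewrite <- (Rpower_1 p hp) at 2. rewrite <- Rpower_plus. f_equal. ring. Qed.

Lemma Rp_shift p x l : Rpower x l = Rpower p l * exp (l * (ln x - ln p)).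
Proof. unfold Rpower. rewrite <- exp_plus. f_equal. ring. Qed.

Lemma part_c s l1 l2 r mu em E a k b pO A p1 p2 B1 B2 :
 0<s -> l1<0 -> 1<l2 -> r = -s*l1*l2 -> mu = s*(1-l1-l2) -> 0<em -> 0<E -> 0<a -> 0<k ->
 b = a + k ->
 pO = em*(l1/(l1-1))*(r-mu)*b ->
 A = E*Rpower pO (1-l1)/(l1*(mu-r)) ->
 0<p1 -> p1<p2 -> p1 <= pO ->
 B1*Rpower p1 l1 + B2*Rpower p1 l2 = E*em*k ->
 l1*B1*Rpower p1 (l1-1) + l2*B2*Rpower p1 (l2-1) = 0 ->
 B1*Rpower p2 l1 + B2*Rpower p2 l2 = A*Rpower p2 l1 + E/(r-mu)*p2 - E*em*a ->
 l1*B1*Rpower p2 (l1-1) + l2*B2*Rpower p2 (l2-1) = l1*A*Rpower p2 (l1-1) + E/(r-mu) ->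
 p1 < em*(r*b) /\ p2 > em*(r*a).
Proof.
intros hs h1 h2 hr hmu hem hE ha hk hb hpO hA hp1 hp12 hp1O H1 H2 H3 H4.
assert (hrm : r - mu = s*(1-l1)*(l2-1)) by (subst; ring).
assert (hrm0 : 0 < r - mu) by (rewrite hrm; apply Rmult_lt_0_compat; [apply Rmult_lt_0_compat|]; lra).
assert (hl : l1/(l1-1)*(r-mu) = -l1*s*(l2-1)) by (rewrite hrm; field; lra).
assert (hbpos : 0 < b) by lra.
assert (hpO' : pO = em*b*(-l1*s*(l2-1))) by (rewrite hpO, <- hl; ring).
assert (hpOpos : 0 < pO).
{ rewrite hpO'.
  assert (0 < -l1*s*(l2-1)) by (apply Rmult_lt_0_compat; [nra|lra]).
  apply Rmult_lt_0_compat; [apply Rmult_lt_0_compat|]; lra. }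
split.
{
  assert (pO < em*(r*b)).
  { rewrite hpO'.
    assert (em*(r*b) = em*b*r) by ring.
    assert (0 < em*b) by (apply Rmult_lt_0_compat; lra).
    assert (-l1*s*(l2-1) < r) by (rewrite hr; nra).
    nra. }
  lra. }
set (K := E/(r-mu)).
assert (hK : 0 < K) by (unfold K; apply Rdiv_lt_0_compat; lra).
set (er := E*em).
assert (her : 0 < er) by (unfold er; apply Rmult_lt_0_compat; lra).
set (F1 := Rpower p1 l1) in *. set (F2 := Rpower p1 l2) in *.
set (G1 := Rpower p2 l1) in *. set (G2 := Rpower p2 l2) in *.
assert (hp2 : 0 < p2) by lra.
assert (H2' : l1*(B1*F1) + l2*(B2*F2) = 0).
{ unfold F1, F2. rewrite <- (Rp_m1 p1 l1 hp1), <- (Rp_m1 p1 l2 hp1).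
  transitivity ((l1*B1*Rpower p1 (l1-1) + l2*B2*Rpower p1 (l2-1))*p1); [ring|]. rewrite H2. ring. }
assert (H4' : l1*(B1*G1) + l2*(B2*G2) = l1*(A*G1) + K*p2).
{ unfold G1, G2. rewrite <- (Rp_m1 p2 l1 hp2), <- (Rp_m1 p2 l2 hp2).
  transitivity ((l1*B1*Rpower p2 (l1-1) + l2*B2*Rpower p2 (l2-1))*p2); [ring|]. rewrite H4. unfold K. ring. }
set (X := B1*F1) in *. set (Y := B2*F2) in *.
assert (hY : Y*(l2-l1) = -l1*er*k).
{ transitivity ((l1*X + l2*Y) - l1*(X+Y)); [ring|]. rewrite H2', H1. unfold er. ring. }
assert (hX : X*(l2-l1) = l2*er*k).
{ transitivity (l2*(X+Y) - (l1*X + l2*Y)); [ring|]. rewrite H2', H1. unfold er. ring. }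
assert (hYpos : 0 < Y).
{ assert (0 < Y*(l2-l1)) by (rewrite hY; apply Rmult_lt_0_compat; [apply Rmult_lt_0_compat|]; lra). nra. }
set (V := B1*G1 - A*G1). set (V2 := B2*G2).
assert (hV2 : V2*(l2-l1) = K*p2 - l1*(K*p2 - er*a)).
{ transitivity ((l1*(B1*G1) + l2*(B2*G2) - l1*(A*G1)) - l1*((B1*G1 + B2*G2) - A*G1)); [unfold V2; ring|].
  rewrite H4', H3. unfold K, er. ring. }
assert (hV : V*(l2-l1) = l2*(K*p2 - er*a) - K*p2).
{ transitivity (l2*((B1*G1 + B2*G2) - A*G1) - (l1*(B1*G1) + l2*(B2*G2) - l1*(A*G1))); [unfold V; ring|].
  rewrite H4', H3. unfold K, er. ring. }
assert (hln : ln p1 < ln p2) by (apply ln_increasing; lra).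
assert (hV2Y : Y < V2).
{ unfold V2, G2. rewrite (Rp_shift p1 p2 l2). fold F2.
  assert (1 < exp (l2 * (ln p2 - ln p1))).
  { assert (0 < l2 * (ln p2 - ln p1)) by (apply Rmult_lt_0_compat; lra).
    assert (hh := exp_ineq1 (l2 * (ln p2 - ln p1)) ltac:(lra)). lra. }
  replace (B2 * (F2 * exp (l2 * (ln p2 - ln p1)))) with (Y * exp (l2 * (ln p2 - ln p1))) by (unfold Y; ring).
  nra. }
assert (hpO2 : pO < p2).
{ assert (e1 : (1-l1)*K*pO = -l1*er*b).
  { rewrite hpO. unfold K, er. field. split; lra. }
  assert (Y*(l2-l1) < V2*(l2-l1)) by (apply Rmult_lt_compat_r; lra).
  assert (0 < (1-l1)*K) by (apply Rmult_lt_0_compat; lra).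
  assert ((1-l1)*K*pO < (1-l1)*K*p2) by (rewrite e1; rewrite hb; nra).
  nra. }
set (O1 := Rpower pO l1). set (O2 := Rpower pO l2).
assert (hB : er*k <= B1*O1 + B2*O2).
{ unfold O1, O2. rewrite (Rp_shift p1 pO l1), (Rp_shift p1 pO l2). fold F1 F2.
  set (t := ln pO - ln p1).
  assert (e1 := exp_ineq1_le (l1*t)). assert (e2 := exp_ineq1_le (l2*t)).
  replace (B1 * (F1 * exp (l1 * t)) + B2 * (F2 * exp (l2 * t))) with
    (X * exp (l1*t) + Y * exp (l2*t)) by (unfold X, Y; ring).
  assert (hX0 : X = l2*er*k/(l2-l1)) by (rewrite <- hX; field; lra).
  assert (hY0 : Y = -l1*er*k/(l2-l1)) by (rewrite <- hY; field; lra).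
  rewrite hX0, hY0.
  assert (0 < er*k/(l2-l1)) by (apply Rdiv_lt_0_compat; [apply Rmult_lt_0_compat|]; lra).
  assert (l2 - l1 <= l2*exp (l1*t) - l1*exp(l2*t)) by nra.
  replace (l2 * er * k / (l2 - l1) * exp (l1 * t) + - l1 * er * k / (l2 - l1) * exp (l2 * t))
    with (er*k/(l2-l1) * (l2*exp (l1*t) - l1*exp(l2*t))) by (field; lra).
  replace (er*k) with (er*k/(l2-l1)*(l2-l1)) at 1 by (field; lra).
  apply Rmult_le_compat_l; lra. }
assert (hC : A*O1 + K*pO - er*a = er*k).
{ assert (A*O1 = E*pO/(l1*(mu-r))).
  { rewrite hA. unfold O1. 
    replace (E * Rpower pO (1 - l1) / (l1 * (mu - r)) * Rpower pO l1) with
      (E * (Rpower pO (1 - l1) * Rpower pO l1) / (l1 * (mu - r))) by (field; split; lra).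
    rewrite <- Rpower_plus. replace (1 - l1 + l1) with 1 by ring. rewrite Rpower_1 by lra. reflexivity. }
  rewrite H. rewrite hpO. unfold K, er. rewrite hb. field. split; lra. }
destruct (Rlt_or_le (em*(r*a)) p2) as [done|hle]; [exact done|exfalso].
set (u := ln pO - ln p2).
assert (hu : u < 0) by (unfold u; assert (ln pO < ln p2) by (apply ln_increasing; lra); lra).
assert (eO1 : O1 = G1 * exp (l1*u)) by (unfold O1, G1, u; apply Rp_shift).
assert (eO2 : O2 = G2 * exp (l2*u)) by (unfold O2, G2, u; apply Rp_shift).
assert (eO : pO = p2 * exp u).
{ rewrite <- (Rpower_1 pO) at 1 by lra. rewrite (Rp_shift p2 pO 1), Rpower_1 by lra. unfold u. f_equal. f_equal. ring. }
set (d := (B1*O1 + B2*O2) - (A*O1 + K*pO - er*a)).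
assert (hd : 0 <= d) by (unfold d; lra).
set (eA := exp (l1*u)) in *. set (eB := exp (l2*u)) in *. set (eu := exp u) in *.
set (P := (l2-1)*eA + (1-l1)*eB - (l2-l1)*eu).
set (Q := (l2-l1) - l2*eA + l1*eB).
assert (hd2 : (l2-l1)*d = K*p2*P + er*a*Q).
{ transitivity ((V*(l2-l1))*eA + (V2*(l2-l1))*eB + (l2-l1)*(- K*p2*eu + er*a)).
  { unfold d, V, V2. rewrite eO1, eO2, eO. ring. }
  rewrite hV, hV2. unfold P, Q. ring. }
assert (hP : 0 <= P) by (apply P_ge; lra).
assert (hT := T_neg l1 l2 u h1 h2 hu). unfold Tf in hT. fold eA eB eu in hT.
assert (hTPQ : -l2*(l2-1)*eA - l1*(1-l1)*eB + l1*l2*(l2-l1)*eu + (1-l1)*(l2-1)*(l2-l1)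
   = -l1*l2*P + (1-l1)*(l2-1)*Q) by (unfold P, Q; ring).
assert (hk1 : (1-l1)*(l2-1)*K*(em*(r*a)) = er*a*(-l1*l2)).
{ unfold K, er. rewrite hrm, hr. field. split; [lra|split; lra]. }
assert (hc0 : 0 < (1-l1)*(l2-1)*K) by (apply Rmult_lt_0_compat; [apply Rmult_lt_0_compat|]; lra).
assert (hmono : (1-l1)*(l2-1)*K*p2*P <= (1-l1)*(l2-1)*K*(em*(r*a))*P).
{ apply Rmult_le_compat_r; [lra|]. apply Rmult_le_compat_l; lra. }
assert (hera : 0 < er*a) by (apply Rmult_lt_0_compat; lra).
assert (hfin : (1-l1)*(l2-1)*(K*p2*P + er*a*Q) < 0).
{ assert (hh : 0 < er*a*(-(-l1*l2*P + (1-l1)*(l2-1)*Q))) by (apply Rmult_lt_0_compat; lra).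
  assert (e1 : (1-l1)*(l2-1)*(K*p2*P + er*a*Q) = (1-l1)*(l2-1)*K*p2*P + (1-l1)*(l2-1)*(er*a*Q)) by ring.
  assert (e2 : (1-l1)*(l2-1)*K*(em*(r*a))*P = er*a*(-l1*l2)*P) by (rewrite hk1; ring).
  assert (e3 : er*a*(-(-l1*l2*P + (1-l1)*(l2-1)*Q)) = -(er*a*(-l1*l2)*P) - (1-l1)*(l2-1)*(er*a*Q)) by ring.
  lra. }
assert (0 <= (l2-l1)*d) by (apply Rmult_le_pos; lra).
assert (hpos : 0 < (1-l1)*(l2-1)) by (apply Rmult_lt_0_compat; lra).
assert (K*p2*P + er*a*Q < 0).
{ destruct (Rlt_or_le (K*p2*P + er*a*Q) 0) as [hh|hh]; auto.
  assert (0 <= (1-l1)*(l2-1)*(K*p2*P + er*a*Q)) by (apply Rmult_le_pos; lra). lra. }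
lra.
Qed.

Lemma Rpower_cont (l x : R) : 0 < x -> continuous (fun p => Rpower p l) x.
Proof.
intro hx. apply continuity_pt_filterlim. apply derivable_continuous_pt.
exists (l * Rpower x (l - 1)). apply derivable_pt_lim_power. exact hx.
Qed.

Lemma part_b s l1 l2 r mu em E er a b pO A pI :
 0<s -> l1<0 -> 1<l2 -> r = -s*l1*l2 -> mu = s*(1-l1-l2) -> 0<em -> 0<E -> er = E*em ->
 0<a -> 0<b -> b <= a ->
 pO = em*(l1/(l1-1))*(r-mu)*b ->
 A = E*Rpower pO (1-l1)/(l1*(mu-r)) ->
 let f := fun p : R => A*(l2-l1)*Rpower p l1 + E/(r-mu)*(l2-1)*p - l2*er*a in
 0 < pI -> f pI = 0 -> (forall p : R, 0 < p -> f p = 0 -> p <= pI) ->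
 pI > em*(r*a).
Proof.
intros hs h1 h2 hr hmu hem hE her ha hb hba hpO hA f hpI hf hmax.
assert (hrm : r - mu = s*(1-l1)*(l2-1)) by (subst; ring).
assert (hrm0 : 0 < r - mu) by (rewrite hrm; apply Rmult_lt_0_compat; [apply Rmult_lt_0_compat|]; lra).
assert (hl : l1/(l1-1)*(r-mu) = -l1*s*(l2-1)) by (rewrite hrm; field; lra).
assert (hpO' : pO = em*b*(-l1*s*(l2-1))) by (rewrite hpO, <- hl; ring).
assert (hc : 0 < -l1*s*(l2-1)) by (apply Rmult_lt_0_compat; [nra|lra]).
assert (hpOpos : 0 < pO) by (rewrite hpO'; apply Rmult_lt_0_compat; [apply Rmult_lt_0_compat|]; lra).
assert (hr0 : 0 < r) by (rewrite hr; nra).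
set (q := em*(r*a)).
assert (hq : 0 < q) by (unfold q; apply Rmult_lt_0_compat; [|apply Rmult_lt_0_compat]; lra).
assert (hApos : 0 < A).
{ rewrite hA. apply Rdiv_lt_0_compat.
  - apply Rmult_lt_0_compat; [lra|apply exp_pos].
  - nra. }
set (L := ln q - ln pO).
set (X := exp (l1 * L)).
assert (hAq : A * Rpower q l1 = E*pO*X/(l1*(mu-r))).
{ rewrite hA. unfold X, L, Rpower.
  assert (ee : exp ((1 - l1) * ln pO) * exp (l1 * ln q) = exp (1 * ln pO) * exp (l1 * (ln q - ln pO)))
    by (rewrite <- !exp_plus; f_equal; ring).
  rewrite Rmult_1_l, exp_ln in ee by lra.
  transitivity (E * (exp ((1 - l1) * ln pO) * exp (l1 * ln q)) / (l1 * (mu - r))); [field; nra|].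
  rewrite ee. field. nra. }
assert (hexpL : exp (- L) = pO / q).
{ unfold L. replace (- (ln q - ln pO)) with (ln pO - ln q) by ring.
  unfold Rminus. rewrite exp_plus, exp_Ropp, !exp_ln by lra. field. lra. }
assert (hratio : pO / q <= 1 - 1/l2).
{ rewrite hpO'. unfold q. rewrite hr.
  replace (em * b * (- l1 * s * (l2 - 1)) / (em * (- s * l1 * l2 * a))) with ((b/a)*(1 - 1/l2)) by (field; repeat split; lra).
  assert (0 < 1 - 1/l2). { assert (1/l2 < 1). { apply (Rmult_lt_reg_r l2); [lra|]. field_simplify; lra. } lra. }
  assert (b/a <= 1). { apply (Rmult_le_reg_r a); [lra|]. field_simplify; lra. }
  nra. }
assert (hL : 1/l2 < L).
{ assert (hL0 : L <> 0).
  { intro HL. rewrite HL, Ropp_0, exp_0 in hexpL. assert (0 < 1/l2) by (apply Rdiv_lt_0_compat; lra). lra. }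
  assert (hh := exp_ineq1 (-L) ltac:(lra)). lra. }
assert (hX : X < l2/(l2-l1)).
{ assert (X < exp (l1/l2)). { unfold X. apply exp_increasing.
    replace (l1/l2) with (l1*(1/l2)) by (field; lra). nra. }
  assert (exp (l1/l2) * exp (-(l1/l2)) = 1) by (rewrite <- exp_plus; replace (l1/l2 + - (l1/l2)) with 0 by ring; apply exp_0).
  assert (hh := exp_ineq1_le (-(l1/l2))).
  assert (0 < 1 + - (l1/l2)). { assert (l1/l2 < 0) by (apply Rdiv_neg_pos; lra). lra. }
  assert (exp (l1/l2) <= l2/(l2-l1)).
  { replace (l2/(l2-l1)) with (1/(1 + - (l1/l2))) by (field; repeat split; lra).
    apply (Rmult_le_reg_r (1 + - (l1/l2))); [lra|].
    replace (1/(1 + - (l1/l2)) * (1 + - (l1/l2))) with 1 by (field; lra).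
    assert (0 < exp (l1/l2)) by apply exp_pos. nra. }
  lra. }
assert (hfq : f q < 0).
{ unfold f. rewrite Rmult_assoc, (Rmult_comm (l2-l1)), <- Rmult_assoc, hAq.
  replace (E * pO * X / (l1 * (mu - r)) * (l2 - l1) + E / (r - mu) * (l2 - 1) * q - l2 * er * a)
    with (E*em*(b*(l2-l1)*X - l2*a)/(1-l1)).
  2:{ rewrite hpO'. unfold q. rewrite her. rewrite hmu, hr. field; repeat split; try lra. all: idtac. }
  apply Rdiv_neg_pos; [|lra].
  assert (0 < E*em) by (apply Rmult_lt_0_compat; lra).
  assert (b*(l2-l1)*X < b*l2). { assert (0 < b*(l2-l1)) by (apply Rmult_lt_0_compat; lra).
    assert (b*(l2-l1)*X < b*(l2-l1)*(l2/(l2-l1))) by (apply Rmult_lt_compat_l; lra).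
    replace (b*(l2-l1)*(l2/(l2-l1))) with (b*l2) in H1 by (field; lra). lra. }
  assert (b*l2 <= a*l2) by nra.
  nra. }
set (K1 := E/(r-mu)*(l2-1)).
assert (hK1 : 0 < K1) by (unfold K1; apply Rmult_lt_0_compat; [apply Rdiv_lt_0_compat|]; lra).
set (Y := q + 1 + l2*er*a/K1).
assert (hera : 0 < l2*er*a/K1).
{ apply Rdiv_lt_0_compat; [|lra]. rewrite her. apply Rmult_lt_0_compat; [apply Rmult_lt_0_compat|]; try lra.
  apply Rmult_lt_0_compat; lra. }
assert (hfY : 0 < f Y).
{ unfold f. fold K1.
  assert (0 < A*(l2-l1)*Rpower Y l1) by (apply Rmult_lt_0_compat; [apply Rmult_lt_0_compat; lra|apply exp_pos]).
  assert (K1*Y = K1*(q+1) + l2*er*a) by (unfold Y; field; lra).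
  assert (0 < K1*(q+1)) by (apply Rmult_lt_0_compat; lra).
  lra. }
destruct (IVT_interv f q Y) as [z [hz1 hz2]].
- intros x hx. apply continuity_pt_filterlim. unfold f.
  apply (continuous_minus (fun p => A*(l2-l1)*Rpower p l1 + E/(r-mu)*(l2-1)*p) (fun _ => l2*er*a)).
  + apply (continuous_plus (fun p => A*(l2-l1)*Rpower p l1) (fun p => E/(r-mu)*(l2-1)*p)).
    * apply (@continuous_mult R_UniformSpace R_AbsRing (fun _ => A*(l2-l1)) (fun p => Rpower p l1)); [apply continuous_const|]. apply Rpower_cont. lra.
    * apply (@continuous_mult R_UniformSpace R_AbsRing (fun _ => E/(r-mu)*(l2-1)) (fun p => p)); [apply continuous_const|apply continuous_id].
  + apply continuous_const.
- unfold Y; lra.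
- exact hfq.
- exact hfY.
- assert (z <> q) by (intro e; rewrite e in hz2; lra).
  assert (z <= pI) by (apply hmax; lra). lra.
Qed.

Theorem corollary5p6 (mu sigma r delta C KI KO : R)
  (Hsigma : 0 < sigma) (Hr : 0 < r) (Hdelta : 0 <= delta) (Hrmu : r > mu) :
  let l1 := lam1 mu sigma r in
  let l2 := lam2 mu sigma r in
  let A := Acoef mu sigma r delta C KO in
  (* (a) *)
  (C - r * KO <= 0 -> C + r * KI > 0 ->
     let pI := exp (- mu * delta) * (l2 / (l2 - 1)) * (r - mu) * (C / r + KI) in
     pI > exp (- mu * delta) * (C + r * KI))
  /\
  (* (b) *)
  (C - r * KO > 0 -> C + r * KI > 0 -> KI + KO >= 0 ->
     let f := fun p : R =>
       A * (l2 - l1) * Rpower p l1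
       + exp ((mu - r) * delta) / (r - mu) * (l2 - 1) * p
       - l2 * exp (- r * delta) * (C / r + KI) in
     forall pI : R,
       0 < pI -> f pI = 0 -> (forall p : R, 0 < p -> f p = 0 -> p <= pI) ->
       pI > exp (- mu * delta) * (C + r * KI))
  /\
  (* (c) *)
  (C - r * KO > 0 -> C + r * KI > 0 -> KI + KO < 0 ->
     pO mu sigma r delta C KO < exp (- mu * delta) * (C + r * KI) ->
     forall p1 p2 : R,
       0 < p1 -> p1 < p2 -> p1 <= pO mu sigma r delta C KO ->
       (exists B1 B2 : R,
          B1 * Rpower p1 l1 + B2 * Rpower p1 l2 = - exp (- r * delta) * (KI + KO)
          /\ l1 * B1 * Rpower p1 (l1 - 1) + l2 * B2 * Rpower p1 (l2 - 1) = 0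
          /\ B1 * Rpower p2 l1 + B2 * Rpower p2 l2
             = A * Rpower p2 l1 + exp ((mu - r) * delta) / (r - mu) * p2
               - exp (- r * delta) * (C / r + KI)
          /\ l1 * B1 * Rpower p2 (l1 - 1) + l2 * B2 * Rpower p2 (l2 - 1)
             = l1 * A * Rpower p2 (l1 - 1) + exp ((mu - r) * delta) / (r - mu)) ->
       p1 < exp (- mu * delta) * (C - r * KO)
       /\ p2 > exp (- mu * delta) * (C + r * KI)).
Proof.
intros l1 l2 A.
assert (LF : r = - (sigma^2/2) * l1 * l2 /\ mu = (sigma^2/2) * (1 - l1 - l2) /\ l1 < 0 /\ 1 < l2)
  by exact (lam_facts mu sigma r Hsigma Hr Hrmu).
destruct LF as [hr [hmu [h1 h2]]].
set (s := sigma^2/2) in *.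
assert (hs : 0 < s) by (unfold s; assert (0 < sigma^2) by (apply pow_lt; lra); lra).
set (em := exp (- mu * delta)).
set (E := exp ((mu - r) * delta)).
assert (hem : 0 < em) by apply exp_pos.
assert (hE : 0 < E) by apply exp_pos.
assert (her : exp (- r * delta) = E * em).
{ unfold E, em. rewrite <- exp_plus. f_equal. ring. }
set (a := C / r + KI).
set (b := C / r - KO).
assert (hCa : C + r * KI = r * a) by (unfold a; field; lra).
assert (hCb : C - r * KO = r * b) by (unfold b; field; lra).
assert (hpOd : pO mu sigma r delta C KO = em*(l1/(l1-1))*(r-mu)*b) by reflexivity.
assert (hAd : A = E*Rpower (pO mu sigma r delta C KO) (1-l1)/(l1*(mu-r))) by reflexivity.
split; [|split].
- intros hKO hKI pI. unfold pI. fold a. rewrite hCa.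
  assert (ha : 0 < a) by (apply (Rmult_lt_reg_l r); lra).
  assert (hrm : r - mu = s*(1-l1)*(l2-1)) by (rewrite hr, hmu; ring).
  assert (e : l2/(l2-1)*(r-mu) = l2*s*(1-l1)) by (rewrite hrm; field; lra).
  assert (l2*s*(1-l1) > r) by (rewrite hr; nra).
  assert (0 < em*a) by (apply Rmult_lt_0_compat; lra).
  replace (em * (l2 / (l2 - 1)) * (r - mu) * a) with (em*a*(l2/(l2-1)*(r-mu))) by ring.
  rewrite e. nra.
- intros hKO hKI hsum f pI hpI hf hmax.
  rewrite hCa.
  assert (ha : 0 < a) by (apply (Rmult_lt_reg_l r); lra).
  assert (hb : 0 < b) by (apply (Rmult_lt_reg_l r); lra).
  assert (hba : b <= a) by (unfold a, b; lra).
  exact (part_b s l1 l2 r mu em E (exp (- r * delta)) a b (pO mu sigma r delta C KO) A pI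
    hs h1 h2 hr hmu hem hE her ha hb hba hpOd hAd hpI hf hmax).
- intros hKO hKI hsum hpOq p1 p2 hp1 hp12 hp1O [B1 [B2 [H1 [H2 [H3 H4]]]]].
  rewrite hCa, hCb.
  assert (ha : 0 < a) by (apply (Rmult_lt_reg_l r); lra).
  set (k := -(KI+KO)).
  assert (hk : 0 < k) by (unfold k; lra).
  assert (hbk : b = a + k) by (unfold a, b, k; ring).
  apply (part_c s l1 l2 r mu em E a k b (pO mu sigma r delta C KO) A p1 p2 B1 B2
    hs h1 h2 hr hmu hem hE ha hk hbk hpOd hAd hp1 hp12 hp1O).
  + rewrite H1, her. unfold k. ring.
  + exact H2.
  + rewrite H3, her. fold E. reflexivity.
  + exact H4.
Qed.
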